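(* Let $F$ be a field of characteristic zero, $k$ a positive integer, and $E$ the infinite-dimensional Grassmann algebra over $F$ graded by $\deg(\cdot)_{k^*}$. Let \[R=\begin{pmatrix} E & E\\ 0 & E\end{pmatrix}\] with the $\mathbb{Z}_2$-grading induced by that of $E$. Then $T_{\mathbb{Z}_2}(E)\,T_{\mathbb{Z}_2}(E)\subsetneq T_{\mathbb{Z}_2}(R)$.
   Context: $E$ is the unitary algebra generated by $e_1,e_2,\dots$ subject to $e_ie_j=-e_je_i$; it has basis $1$ and $e_{i_1}\cdots e_{i_s}$ ($i_1<\cdots<i_s$). The grading $\deg(\cdot)_{k^*}$ gives $e_i$ degree $1\in\mathbb{Z}_2$ for $i=1,\dots,k$ and degree $0$ otherwise, and $e_{i_1}\cdots e_{i_s}$ degree $\deg(e_{i_1})+\cdots+\deg(e_{i_s})$. $R$ is graded by letting its degree-$g$ component consist of the matrices all of whose entries have degree $g$. For a $\mathbb{Z}_2$-graded algebra, $T_{\mathbb{Z}_2}(\cdot)$ is its ideal of graded polynomial identities in the free algebra on countably many degree-$0$ and degree-$1$ variables; the product of ideals is the usual one. *)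

(* Defs.v *)
From HB Require Import structures.
From mathcomp Require Import all_boot all_order all_algebra.
From mathcomp Require Import finmap.
Set Implicit Arguments. Unset Strict Implicit. Unset Printing Implicit Defensive.
Import Order.TTheory GRing.Theory Num.Theory.
Local Open Scope ring_scope.
Local Open Scope fset_scope.

(* Free (unitary, associative, noncommutative) algebra F<X> on the     *)
(* Z2-graded variables X = {x_(g,i) | g : Z2 (= bool), i : nat}.        *)
(* A variable (g, i) has degree g.  A polynomial is a finitely          *)
(* supported coefficient function on words (monomials).                 *)
Definition var := (bool * nat)%type.
Definition word := seq var.

Definition fpoly (F : fieldType) := word -> F.

Definition finsupp_poly (F : fieldType) (f : fpoly F) : Prop :=
  exists s : seq word, forall w, w \notin s -> f w = 0.

Definition pmul (F : fieldType) (f g : fpoly F) : fpoly F :=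
  fun w => \sum_(i < (size w).+1) f (take i w) * g (drop i w).

(* hom g a  <->  a lies in the homogeneous component of degree g.      *)
Record galg (F : fieldType) := GAlg {
  gcar  : Type;
  gzero : gcar;
  gadd  : gcar -> gcar -> gcar;
  gscal : F -> gcar -> gcar;
  gone  : gcar;
  gmul  : gcar -> gcar -> gcar;
  ghom  : bool -> gcar -> Prop }.

Definition eval_word (F : fieldType) (A : galg F) (phi : var -> gcar A)
  (w : word) : gcar A := foldr (fun x acc => gmul (phi x) acc) (@gone F A) w.

(* evaluation of f, where s is a duplicate-free list of words containing *)
(* the support of f                                                       *)
Definition eval_poly (F : fieldType) (A : galg F) (phi : var -> gcar A)
  (s : seq word) (f : fpoly F) : gcar A :=
  foldr (fun w acc => gadd (gscal (f w) (eval_word phi w)) acc) (@gzero F A) s.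

Definition graded_subst (F : fieldType) (A : galg F) (phi : var -> gcar A) :=
  forall x : var, @ghom F A x.1 (phi x).

Definition TZ2 (F : fieldType) (A : galg F) (f : fpoly F) : Prop :=
  finsupp_poly f /\
  forall phi : var -> gcar A, graded_subst phi ->
  forall s : seq word, uniq s -> (forall w, w \notin s -> f w = 0) ->
  eval_poly phi s f = @gzero F A.

Definition all_seq (T : Type) (P : T -> Prop) (s : seq T) : Prop :=
  foldr (fun x acc => P x /\ acc) True s.

Definition ideal_prod (F : fieldType) (I J : fpoly F -> Prop) (h : fpoly F)
  : Prop :=
  exists s : seq (fpoly F * fpoly F),
    all_seq (fun p => I p.1 /\ J p.2) s /\
    forall w, h w = \sum_(p <- s) pmul p.1 p.2 w.

(* Generators e_i, i : nat (e_0, e_1, ... stand for the paper's        *)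
(* e_1, e_2, ...).  Basis: e_S = e_(i1)...e_(is), S = {i1<...<is}.      *)
(* An element is a finitely supported coefficient function on finite    *)
(* subsets of nat.                                                      *)
Definition Gr (F : fieldType) := {fset nat} -> F.

Definition finsupp_Gr (F : fieldType) (a : Gr F) : Prop :=
  exists s : seq {fset nat}, forall S, S \notin s -> a S = 0.

(* number of inversions when concatenating e_T and e_U *)
Definition ninv (T U : {fset nat}) : nat :=
  \sum_(i <- T) #|` [fset j in U | (j < i)%N]|.

(* e_T e_U = (-1)^(ninv T U) e_(T u U) if T, U disjoint, 0 otherwise *)
Definition Gr_mul (F : fieldType) (a b : Gr F) : Gr F :=
  fun S => \sum_(T <- fpowerset S)
             (-1) ^+ ninv T (S `\` T) * a T * b (S `\` T).

Definition Gr_add (F : fieldType) (a b : Gr F) : Gr F := fun S => (a S + b S)%R.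
Definition Gr_scal (F : fieldType) (c : F) (a : Gr F) : Gr F := fun S => (c * a S)%R.
Definition Gr_zero (F : fieldType) : Gr F := fun _ => 0.
Definition Gr_one (F : fieldType) : Gr F := fun S => if S == fset0 then 1 else 0.

(* grading deg_{k*}: e_i odd iff i is among the first k generators *)
Definition degk (k : nat) (S : {fset nat}) : bool :=
  odd #|` [fset i in S | (i < k)%N]|.

Definition Gr_hom (F : fieldType) (k : nat) (g : bool) (a : Gr F) : Prop :=
  finsupp_Gr a /\ forall S, a S != 0 -> degk k S = g.

Definition Ek (F : fieldType) (k : nat) : galg F :=
  @GAlg F (Gr F) (@Gr_zero F) (@Gr_add F) (@Gr_scal F) (@Gr_one F)
    (@Gr_mul F) (@Gr_hom F k).

(* R = upper triangular 2x2 matrices over E: (a, b, c) = [[a,b],[0,c]]  *)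
(* graded entrywise.                                                    *)
Definition UT (F : fieldType) := (Gr F * Gr F * Gr F)%type.

Definition UT_mul (F : fieldType) (x y : UT F) : UT F :=
  let: (a, b, c) := x in let: (a', b', c') := y in
  (Gr_mul a a', Gr_add (Gr_mul a b') (Gr_mul b c'), Gr_mul c c').
Definition UT_add (F : fieldType) (x y : UT F) : UT F :=
  let: (a, b, c) := x in let: (a', b', c') := y in
  (Gr_add a a', Gr_add b b', Gr_add c c').
Definition UT_scal (F : fieldType) (r : F) (x : UT F) : UT F :=
  let: (a, b, c) := x in (Gr_scal r a, Gr_scal r b, Gr_scal r c).
Definition UT_zero (F : fieldType) : UT F := (@Gr_zero F, @Gr_zero F, @Gr_zero F).
Definition UT_one (F : fieldType) : UT F := (@Gr_one F, @Gr_zero F, @Gr_one F).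
Definition UT_hom (F : fieldType) (k : nat) (g : bool) (x : UT F) : Prop :=
  let: (a, b, c) := x in [/\ Gr_hom k g a, Gr_hom k g b & Gr_hom k g c].

Definition Rk (F : fieldType) (k : nat) : galg F :=
  @GAlg F (UT F) (@UT_zero F) (@UT_add F) (@UT_scal F) (@UT_one F)
    (@UT_mul F) (@UT_hom F k).

(* Main.v *)
Require Import Defs.
From HB Require Import structures.
From mathcomp Require Import all_boot all_order all_algebra finmap ring.
From Stdlib Require Import FunctionalExtensionality.
Set Implicit Arguments. Unset Strict Implicit. Unset Printing Implicit Defensive.
Import Order.TTheory GRing.Theory Num.Theory.
Local Open Scope ring_scope.
Local Open Scope fset_scope.

Lemma ninvUl (A B C : {fset nat}) : [disjoint A & B]%fset ->
  ninv (A `|` B) C = (ninv A C + ninv B C)%N.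
Proof.
move=> dAB; rewrite /ninv (big_fsetID _ (mem A)) /=; congr (_ + _)%N.
  apply: eq_fbigl => x; rewrite !inE /=; case: (x \in A) => //; by rewrite andbF.
apply: eq_fbigl => x; rewrite !inE /=.
case xA: (x \in A) => /=; last by rewrite andbT.
by rewrite (negbTE (fdisjointP dAB x xA)).
Qed.

Lemma ninvUr (A B C : {fset nat}) : [disjoint B & C]%fset ->
  ninv A (B `|` C) = (ninv A B + ninv A C)%N.
Proof.
move=> dBC; rewrite /ninv -big_split /=; apply: eq_bigr => i _.
rewrite -cardfsUI.
have -> : [fset j in B `|` C | (j < i)%N] = [fset j in B | (j < i)%N] `|` [fset j in C | (j < i)%N].
  by apply/fsetP => x; rewrite !inE /=; case: (x \in B); case: (x \in C); case: (x < i)%N.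
have -> : [fset j in B | (j < i)%N] `&` [fset j in C | (j < i)%N] = fset0.
  apply/fsetP => x; have := fdisjointP dBC x; rewrite !inE /=; case: (x \in B); case: (x \in C); rewrite /=; by [|move=> /(_ isT)|rewrite andbF].

by rewrite cardfs0 addn0.
Qed.

Section GrAlg.
Variable F : fieldType.
Implicit Types a b c : Gr F.
Implicit Types S T U V : {fset nat}.

Lemma sumPD S U (G : {fset nat} -> F) :
 \sum_(V <- fpowerset (S `\` U)) G V = \sum_(V <- fpowerset S | [disjoint V & U]%fset) G V.
Proof.
rewrite [RHS]big_fset_condE; apply: eq_fbigl => V; rewrite !inE fpowersetCE fpowersetE.
by [].
Qed.

Lemma sumPsub S T (G : {fset nat} -> F) : T `<=` S ->
 \sum_(V <- fpowerset T) G V = \sum_(V <- fpowerset S | V `<=` T) G V.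
Proof.
move=> TS; rewrite [RHS]big_fset_condE; apply: eq_fbigl => V; rewrite !inE !fpowersetE.
case VT: (V `<=` T); last by rewrite andbF.
by rewrite (fsubset_trans VT TS).
Qed.

Lemma sumPreindex S T1 (G : {fset nat} -> F) : T1 `<=` S ->
 \sum_(T <- fpowerset S | T1 `<=` T) G T =
 \sum_(B <- fpowerset S | [disjoint B & T1]%fset) G (T1 `|` B).
Proof.
move=> T1S; rewrite -sumPD.
rewrite (_ : \sum_(B <- fpowerset (S `\` T1)) G (T1 `|` B) =
   \sum_(T <- [fset T1 `|` B | B in fpowerset (S `\` T1)]) G T); last first.
  rewrite [RHS]big_imfset //=.
  move=> B B' HB HB'.
  have : B \in fpowerset (S `\` T1) := HB.
  have : B' \in fpowerset (S `\` T1) := HB'.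
  rewrite !fpowersetCE => /andP[_ dB'] /andP[_ dB] E.
  apply/fsetP => x; have := congr1 (fun X => x \in X) E; rewrite !inE /=.
  case xT: (x \in T1) => //=.
  by rewrite (negbTE (fdisjointP_sym dB x xT)) (negbTE (fdisjointP_sym dB' x xT)).
rewrite [LHS]big_fset_condE; apply: eq_fbigl => T; rewrite !inE fpowersetE.
apply/andP/imfsetP => [[TS T1T]|[B /=]].
  exists (T `\` T1).
    change (T `\` T1 \in fpowerset (S `\` T1)).
    rewrite fpowersetCE; apply/andP; split.
      by apply/fsubsetP => x; rewrite !inE /= => /andP[_ /(fsubsetP TS)].
    by apply/fdisjointP => x; rewrite !inE /= => /andP[].
  apply/fsetP => x; rewrite !inE /=; case: (boolP (x \in T1)) => //= /(fsubsetP T1T) ->.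
  by [].
move=> HB ->.
have : B \in fpowerset (S `\` T1) := HB.
rewrite fpowersetCE => /andP[BS dB]; split; last by rewrite fsubsetUl.
by rewrite fsubUset T1S.
Qed.

Lemma Gr_mulA a b c : Gr_mul (Gr_mul a b) c = Gr_mul a (Gr_mul b c).
Proof.
apply: functional_extensionality => S; rewrite /Gr_mul.
transitivity (\sum_(T1 <- fpowerset S) \sum_(B <- fpowerset S | [disjoint B & T1]%fset)
   ((-1) ^+ ninv (T1 `|` B) (S `\` (T1 `|` B)) *
    ((-1) ^+ ninv T1 ((T1 `|` B) `\` T1) * a T1 * b ((T1 `|` B) `\` T1)) *
    c (S `\` (T1 `|` B)))).
  rewrite big_seq; under eq_bigr => T TS.
    rewrite fpowersetE in TS.
    rewrite (sumPsub _ TS) mulr_sumr mulr_suml.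
    over.
  rewrite /= -big_seq.
  rewrite (exchange_big_dep xpredT) //=.
  rewrite big_seq [RHS]big_seq; apply: eq_bigr => T1 T1S.
  rewrite fpowersetE in T1S.
  exact: (sumPreindex (fun i => (-1) ^+ ninv i (S `\` i) * ((-1) ^+ ninv T1 (i `\` T1) * a T1 * b (i `\` T1)) * c (S `\` i)) T1S).
symmetry; under eq_bigr => U _ do rewrite (sumPD S U) mulr_sumr.
apply: eq_big_seq => T1; rewrite fpowersetE => T1S.
rewrite big_seq_cond [RHS]big_seq_cond; apply: eq_bigr => B /andP[BS dB].
rewrite fpowersetE in BS.
have E1 : (T1 `|` B) `\` T1 = B.
  apply/fsetP => x; rewrite !inE /=; case: (boolP (x \in B)) => xB; last by case: (x \in T1).
  by rewrite (fdisjointP dB x xB) orbT.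
have E2 : S `\` (T1 `|` B) = (S `\` T1) `\` B by rewrite fsetDDl.
have E3 : S `\` T1 = B `|` ((S `\` T1) `\` B).
  apply/fsetP => x; rewrite !inE /=; case: (boolP (x \in B)) => xB //=.
  by rewrite (fdisjointP dB x xB) (fsubsetP BS x xB).
have dBW : [disjoint B & (S `\` T1) `\` B]%fset.
  by apply/fdisjointP => x xB; rewrite !inE /= xB.
have dTB : [disjoint T1 & B]%fset by rewrite fdisjoint_sym.
rewrite E1 E2 ninvUl // {1}E3 ninvUr // !exprD.
move: ((-1 : F) ^+ ninv T1 B) ((-1 : F) ^+ ninv T1 _) ((-1 : F) ^+ ninv B _) (a T1) (b B) (c _) => x1 x2 x3 x4 x5 x6.
move: ((-1 : F) ^+ _) => x7; ring.
Qed.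

Lemma Gr_mulDl a b c : Gr_mul (Gr_add a b) c = Gr_add (Gr_mul a c) (Gr_mul b c).
Proof.
apply: functional_extensionality => S; rewrite /Gr_mul /Gr_add -big_split /=.
by apply: eq_bigr => T _; rewrite mulrDr mulrDl.
Qed.

Lemma Gr_mulDr a b c : Gr_mul a (Gr_add b c) = Gr_add (Gr_mul a b) (Gr_mul a c).
Proof.
apply: functional_extensionality => S; rewrite /Gr_mul /Gr_add -big_split /=.
by apply: eq_bigr => T _; rewrite mulrDr.
Qed.

Lemma Gr_mulZl r a b : Gr_mul (Gr_scal r a) b = Gr_scal r (Gr_mul a b).
Proof.
apply: functional_extensionality => S; rewrite /Gr_mul /Gr_scal mulr_sumr.
apply: eq_bigr => T _; move: ((-1 : F) ^+ _) => x; ring.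
Qed.

Lemma Gr_mulZr r a b : Gr_mul a (Gr_scal r b) = Gr_scal r (Gr_mul a b).
Proof.
apply: functional_extensionality => S; rewrite /Gr_mul /Gr_scal mulr_sumr.
apply: eq_bigr => T _; move: ((-1 : F) ^+ _) => x; ring.
Qed.

Lemma ninv0l U : ninv fset0 U = 0%N.
Proof. by rewrite /ninv big_seq_fset0. Qed.

Lemma ninv0r T : ninv T fset0 = 0%N.
Proof.
rewrite /ninv big1 // => i _.
by rewrite (_ : [fset j in fset0 | (j < i)%N] = fset0) ?cardfs0 //; apply/fsetP => x; rewrite !inE.
Qed.

Lemma Gr_mul1l a : Gr_mul (@Gr_one F) a = a.
Proof.
apply: functional_extensionality => S; rewrite /Gr_mul /Gr_one.
rewrite (big_fsetD1 fset0) /=; last by rewrite fpowersetE fsub0set.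
rewrite ninv0l fsetD0 expr0 !mul1r big1_fset ?addr0 // => T.
by rewrite !inE => /andP[/negbTE -> _] _; rewrite mulr0 mul0r.
Qed.

Lemma Gr_mul1r a : Gr_mul a (@Gr_one F) = a.
Proof.
apply: functional_extensionality => S; rewrite /Gr_mul /Gr_one.
rewrite (big_fsetD1 S) /=; last by rewrite fpowersetE fsubset_refl.
rewrite fsetDv eqxx ninv0r expr0 !mul1r mulr1 big1_fset ?addr0 // => T.
rewrite !inE fpowersetE => /andP[TS TsubS] _.
case: ifP; rewrite ?mulr0 // => /eqP E.
suff : T = S by move/eqP: TS.
apply/fsetP => x; apply/idP/idP; first by move/(fsubsetP TsubS).
move=> xS; apply: contraT => xT.
have : x \in S `\` T by rewrite !inE /= xS xT.
by rewrite E inE.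
Qed.
End GrAlg.

Local Open Scope ring_scope.

Definition cover (F : fieldType) (s : seq word) (f : fpoly F) :=
  uniq s /\ forall w, w \notin s -> f w = 0.

Section Cover.
Variable F : fieldType.

Lemma sum_pick (T : eqType) (t : seq T) (x : T) (X : T -> F) :
  uniq t -> x \in t ->
  \sum_(w <- t) (if x == w then 1 else 0) * X w = X x.
Proof.
move=> ut xt; rewrite (bigD1_seq x) //= eqxx mul1r big1 ?addr0 // => w.
by rewrite eq_sym => /negbTE ->; rewrite mul0r.
Qed.

Lemma cover_pick (s : seq word) (f : fpoly F) x : cover s f ->
  f x = \sum_(u <- s) (if u == x then f u else 0).
Proof.
move=> [us fs]; case: (boolP (x \in s)) => xs.
  rewrite (bigD1_seq x) //= eqxx big1 ?addr0 // => w /negbTE ->; done.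
rewrite fs // big1 // => u _; case: eqP => // ->; exact: fs.
Qed.

Lemma sum_cover_sub (X : word -> F) (f : fpoly F) s t :
  cover s f -> uniq t -> {subset s <= t} ->
  \sum_(w <- s) f w * X w = \sum_(w <- t) f w * X w.
Proof.
move=> [us fs] ut st; rewrite [RHS](bigID (fun w => w \in s)) /=.
rewrite [X in (_ + X)%R]big1 ?addr0; last by move=> w /fs ->; rewrite mul0r.
rewrite -[RHS]big_filter; apply: perm_big; apply: uniq_perm => //; first exact: filter_uniq.
by move=> w; rewrite mem_filter; case: (boolP (w \in s)) => // /st ->.
Qed.

Lemma sum_cover (X : word -> F) (f : fpoly F) s t :
  cover s f -> cover t f ->
  \sum_(w <- s) f w * X w = \sum_(w <- t) f w * X w.
Proof.
move=> cs ct; rewrite (sum_cover_sub X cs (t := undup (s ++ t))) ?undup_uniq //; last first.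
  by move=> w ws; rewrite mem_undup mem_cat ws.
by rewrite (sum_cover_sub X ct (t := undup (s ++ t))) ?undup_uniq // => w wt; rewrite mem_undup mem_cat wt orbT.
Qed.

Lemma pmul_cover (f g : fpoly F) sf sg : cover sf f -> cover sg g ->
  cover (undup [seq u ++ v | u <- sf, v <- sg]) (pmul f g).
Proof.
move=> [uf f0] [ug g0]; split; first exact: undup_uniq.
move=> w wn; rewrite /pmul big1 // => i _.
case: (boolP (take i w \in sf)) => tf; last by rewrite f0 // mul0r.
case: (boolP (drop i w \in sg)) => dg; last by rewrite g0 // mulr0.
move: wn; rewrite mem_undup; case/negP; apply/allpairsP.
by exists (take i w, drop i w); rewrite /= cat_take_drop.
Qed.

Lemma split_count (w u v : word) :
  \sum_(i < (size w).+1) (if (u == take i w) && (v == drop i w) then 1 else 0 : F)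
  = if u ++ v == w then 1 else 0.
Proof.
case: eqP => [<-|ne].
  have su : (size u < (size (u ++ v)).+1)%N by rewrite size_cat ltnS leq_addr.
  rewrite (bigD1 (Ordinal su)) //= take_size_cat // drop_size_cat // !eqxx big1 ?addr0 //.
  move=> i /eqP ne; case: eqP => // Eu; case: ne; apply: val_inj => /=.
  have := congr1 size Eu; rewrite size_takel; [by move=> ->| by rewrite -ltnS (ltn_ord i)].
rewrite big1 // => i _; case: ifP => // /andP[/eqP Eu /eqP Ev].
by case: ne; rewrite Eu Ev cat_take_drop.
Qed.

Lemma pmul_sum (f g : fpoly F) sf sg (X : word -> F) :
  cover sf f -> cover sg g ->
  \sum_(w <- undup [seq u ++ v | u <- sf, v <- sg]) pmul f g w * X w =
  \sum_(u <- sf) \sum_(v <- sg) f u * g v * X (u ++ v).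
Proof.
move=> cf cg; set t := undup _.
have ut : uniq t by exact: undup_uniq.
transitivity (\sum_(w <- t) \sum_(u <- sf) \sum_(v <- sg)
   (f u * g v * ((if u ++ v == w then 1 else 0) * X w))).
  apply: eq_bigr => w _; rewrite /pmul.
  under eq_bigr => i _ do rewrite (cover_pick (take i w) cf) (cover_pick (drop i w) cg) mulr_suml.
  under eq_bigr => i _ do under eq_bigr => u _ do rewrite mulr_sumr.
  rewrite mulr_suml.
  under eq_bigr => i _ do rewrite mulr_suml.
  rewrite [LHS]exchange_big /=; apply: eq_bigr => u _.
  under eq_bigr => i _ do rewrite mulr_suml.
  rewrite [LHS]exchange_big /=; apply: eq_bigr => v _.
  rewrite -split_count mulr_suml mulr_sumr; apply: eq_bigr => i _.
  rewrite [u == _]eq_sym [v == _]eq_sym.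
  by case: (take i w == u); case: (drop i w == v) => /=; ring.
rewrite exchange_big /= big_seq [RHS]big_seq; apply: eq_bigr => u us.
rewrite exchange_big /= big_seq [RHS]big_seq; apply: eq_bigr => v vs.
rewrite -mulr_sumr sum_pick //.
by rewrite /t mem_undup; apply/allpairsP; exists (u, v).
Qed.
End Cover.

Definition gsum (F : fieldType) (A : galg F) (s : seq word) (c : word -> F)
  (G : word -> gcar A) : gcar A :=
  foldr (fun w acc => gadd (gscal (c w) (G w)) acc) (@gzero F A) s.

Section GenAlg.
Variables (F : fieldType) (A : galg F) (I : Type) (co : gcar A -> I -> F).
Hypothesis co_inj : forall x y, (forall i, co x i = co y i) -> x = y.
Hypothesis co_add : forall x y i, co (gadd x y) i = co x i + co y i.
Hypothesis co_scal : forall c x i, co (gscal c x) i = c * co x i.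
Hypothesis co_zero : forall i, co (@gzero F A) i = 0.
Hypothesis mulDl : forall x y z : gcar A, gmul (gadd x y) z = gadd (gmul x z) (gmul y z).
Hypothesis mulDr : forall x y z : gcar A, gmul x (gadd y z) = gadd (gmul x y) (gmul x z).
Hypothesis mulZl : forall c (x y : gcar A), gmul (gscal c x) y = gscal c (gmul x y).
Hypothesis mulZr : forall c (x y : gcar A), gmul x (gscal c y) = gscal c (gmul x y).
Hypothesis mulA : forall x y z : gcar A, gmul (gmul x y) z = gmul x (gmul y z).
Hypothesis mul1l : forall x : gcar A, gmul (@gone F A) x = x.

Lemma zero_scal x : @gzero F A = gscal 0 x.
Proof. by apply: co_inj => i; rewrite co_zero co_scal mul0r. Qed.

Lemma gmul0l y : gmul (@gzero F A) y = gzero A.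
Proof. by rewrite {1}(zero_scal (gzero A)) mulZl; apply: co_inj => i; rewrite co_scal co_zero mul0r. Qed.

Lemma gmul0r y : gmul y (@gzero F A) = gzero A.
Proof. by rewrite {1}(zero_scal (gzero A)) mulZr; apply: co_inj => i; rewrite co_scal co_zero mul0r. Qed.

Lemma co_gsum s c (G : word -> gcar A) i : co (gsum s c G) i = \sum_(w <- s) c w * co (G w) i.
Proof.
elim: s => [|w s IH] /=; first by rewrite big_nil co_zero.
by rewrite big_cons co_add co_scal IH.
Qed.

Lemma gsum_mull s c (G : word -> gcar A) (y : gcar A) : gmul (gsum s c G) y = gsum s c (fun w => gmul (G w) y).
Proof.
elim: s => [|w s IH] /=; first by rewrite gmul0l.
by rewrite mulDl mulZl IH.
Qed.

Lemma gsum_mulr s c (G : word -> gcar A) (y : gcar A) : gmul y (gsum s c G) = gsum s c (fun w => gmul y (G w)).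
Proof.
elim: s => [|w s IH] /=; first by rewrite gmul0r.
by rewrite mulDr mulZr IH.
Qed.

Lemma eval_word_cat (phi : var -> gcar A) u v :
  eval_word phi (u ++ v) = gmul (eval_word phi u) (eval_word phi v).
Proof.
elim: u => [|x u IH] /=; first by rewrite mul1l.
by rewrite /eval_word /= -/(eval_word phi (u ++ v)) IH mulA.
Qed.

Lemma co_eval (phi : var -> gcar A) s f i :
  co (eval_poly phi s f) i = \sum_(w <- s) f w * co (eval_word phi w) i.
Proof. exact: co_gsum. Qed.

Lemma eval_pmul (phi : var -> gcar A) f g sf sg s :
  cover sf f -> cover sg g -> cover s (pmul f g) ->
  eval_poly phi s (pmul f g) = gmul (eval_poly phi sf f) (eval_poly phi sg g).
Proof.
move=> cf cg cs; apply: co_inj => i; rewrite co_eval.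
rewrite (sum_cover _ cs (pmul_cover cf cg)) pmul_sum //.
rewrite /eval_poly -/(gsum sf f _) gsum_mull co_gsum; apply: eq_bigr => u _.
rewrite -/(gsum sg g _) gsum_mulr co_gsum mulr_sumr; apply: eq_bigr => v _.
by rewrite eval_word_cat mulrA.
Qed.

Lemma all_seq_impl T (P Q : T -> Prop) (l : seq T) :
  (forall p, P p -> Q p) -> all_seq P l -> all_seq Q l.
Proof. by move=> PQ; elim: l => //= x l IH [/PQ Hx /IH]. Qed.

Lemma all_seq_and T (P Q : T -> Prop) (l : seq T) :
  all_seq P l -> all_seq Q l -> all_seq (fun p => P p /\ Q p) l.
Proof. by elim: l => //= x l IH [Px Pl] [Qx Ql]; split; [split|apply: IH]. Qed.

Lemma sum_all_zero T (l : seq T) (G : T -> F) :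
  all_seq (fun p => G p = 0) l -> \sum_(p <- l) G p = 0.
Proof. by elim: l => [|x l IH] /=; rewrite ?big_nil // big_cons => -[-> /IH ->]; rewrite addr0. Qed.

Lemma common_cover (ps : seq (fpoly F * fpoly F)) :
  all_seq (fun p => exists t, cover t (pmul p.1 p.2)) ps ->
  exists L, uniq L /\ all_seq (fun p => forall w, w \notin L -> pmul p.1 p.2 w = 0) ps.
Proof.
elim: ps => [|p ps IH] /= H; first by exists [::].
case: H => [[t [ut tz]] /IH [L [uL Lz]]].
exists (undup (t ++ L)); split; first exact: undup_uniq.
split.
  by move=> w; rewrite mem_undup mem_cat negb_or => /andP[wt wL]; exact: tz.
apply: all_seq_impl Lz => q Hq w; rewrite mem_undup mem_cat negb_or => /andP[wt wL].
exact: Hq.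
Qed.

Lemma eval_ideal_zero (phi : var -> gcar A) (h : fpoly F) ps s :
  (forall w, h w = \sum_(p <- ps) pmul p.1 p.2 w) -> cover s h ->
  all_seq (fun p => exists sf sg, cover sf p.1 /\ cover sg p.2 /\
       gmul (eval_poly phi sf p.1) (eval_poly phi sg p.2) = gzero A) ps ->
  eval_poly phi s h = gzero A.
Proof.
move=> hE cs H.
have [L [uL Lz]] : exists L, uniq L /\ all_seq (fun p => forall w, w \notin L -> pmul p.1 p.2 w = 0) ps.
  apply: common_cover; apply: all_seq_impl H => p [sf [sg [cf [cg _]]]].
  by exists (undup [seq u ++ v | u <- sf, v <- sg]); exact: pmul_cover.
set L' := undup (s ++ L).
have cL : cover L' h.
  split; first exact: undup_uniq.
  by move=> w; rewrite mem_undup mem_cat negb_or => /andP[ws _]; case: cs => _ ->.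
apply: co_inj => i; rewrite co_zero co_eval (sum_cover _ cs cL).
under eq_bigr => w _ do rewrite hE mulr_suml.
rewrite exchange_big /=; apply: sum_all_zero.
apply: all_seq_impl (all_seq_and H Lz) => p [[sf [sg [cf [cg E]]]] Lp].
have cp : cover L' (pmul p.1 p.2).
  split; first exact: undup_uniq.
  by move=> w; rewrite mem_undup mem_cat negb_or => /andP[_ wL]; exact: Lp.
by rewrite -(co_eval phi L' (pmul p.1 p.2) i) (eval_pmul phi cf cg cp) E co_zero.
Qed.
End GenAlg.

Section UTalg.
Variable F : fieldType.

Lemma Gr_mul0l (b : Gr F) : Gr_mul (@Gr_zero F) b = @Gr_zero F.
Proof.
apply: functional_extensionality => S; rewrite /Gr_mul /Gr_zero big1 // => T _.
by rewrite mulr0 mul0r.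
Qed.

Lemma Gr_mul0r (b : Gr F) : Gr_mul b (@Gr_zero F) = @Gr_zero F.
Proof.
apply: functional_extensionality => S; rewrite /Gr_mul /Gr_zero big1 // => T _.
by rewrite mulr0.
Qed.

Definition mkUT (hom : bool -> UT F -> Prop) : galg F :=
  @GAlg F (UT F) (@UT_zero F) (@UT_add F) (@UT_scal F) (@UT_one F) (@UT_mul F) hom.

Definition coUT (x : UT F) (i : nat * {fset nat}) : F :=
  let: (n, Z) := i in if n == 0%N then x.1.1 Z else if n == 1%N then x.1.2 Z else x.2 Z.

Lemma coUT_inj (x y : UT F) : (forall i, coUT x i = coUT y i) -> x = y.
Proof.
case: x => [[a b] c]; case: y => [[a' b'] c'] H.
have Ha : a = a' by apply: functional_extensionality => S; exact: (H (0%N, S)).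
have Hb : b = b' by apply: functional_extensionality => S; exact: (H (1%N, S)).
have Hc : c = c' by apply: functional_extensionality => S; exact: (H (2%N, S)).
by rewrite Ha Hb Hc.
Qed.

Lemma coUT_add (x y : UT F) i : coUT (UT_add x y) i = coUT x i + coUT y i.
Proof. by case: x => [[a b] c]; case: y => [[a' b'] c']; case: i => [[|[|n]] Z]. Qed.

Lemma coUT_scal r (x : UT F) i : coUT (UT_scal r x) i = r * coUT x i.
Proof. by case: x => [[a b] c]; case: i => [[|[|n]] Z]. Qed.

Lemma coUT_zero i : coUT (@UT_zero F) i = 0.
Proof. by case: i => [[|[|n]] Z]. Qed.

Ltac grsolve := apply: functional_extensionality => Z0; rewrite /Gr_add /Gr_scal /=; ring.

Lemma UT_mulDl (x y z : UT F) : UT_mul (UT_add x y) z = UT_add (UT_mul x z) (UT_mul y z).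
Proof.
case: x => [[a b] c]; case: y => [[a' b'] c']; case: z => [[a'' b''] c''] /=.
by rewrite !Gr_mulDl; congr (_, _, _); grsolve.
Qed.

Lemma UT_mulDr (x y z : UT F) : UT_mul x (UT_add y z) = UT_add (UT_mul x y) (UT_mul x z).
Proof.
case: x => [[a b] c]; case: y => [[a' b'] c']; case: z => [[a'' b''] c''] /=.
by rewrite !Gr_mulDr; congr (_, _, _); grsolve.
Qed.

Lemma UT_mulZl r (x y : UT F) : UT_mul (UT_scal r x) y = UT_scal r (UT_mul x y).
Proof.
case: x => [[a b] c]; case: y => [[a' b'] c'] /=.
by rewrite !Gr_mulZl; congr (_, _, _); grsolve.
Qed.

Lemma UT_mulZr r (x y : UT F) : UT_mul x (UT_scal r y) = UT_scal r (UT_mul x y).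
Proof.
case: x => [[a b] c]; case: y => [[a' b'] c'] /=.
by rewrite !Gr_mulZr; congr (_, _, _); grsolve.
Qed.

Lemma UT_mulA (x y z : UT F) : UT_mul (UT_mul x y) z = UT_mul x (UT_mul y z).
Proof.
case: x => [[a b] c]; case: y => [[a' b'] c']; case: z => [[a'' b''] c''] /=.
by rewrite !Gr_mulDl !Gr_mulDr !Gr_mulA; congr (_, _, _); grsolve.
Qed.

Lemma UT_mul1l (x : UT F) : UT_mul (@UT_one F) x = x.
Proof.
case: x => [[a b] c] /=.
by rewrite !Gr_mul1l Gr_mul0l; congr (_, _, _); apply: functional_extensionality => Z0; rewrite /Gr_add /Gr_zero addr0.
Qed.

End UTalg.

Section Main.
Variable F : fieldType.
Variable k : nat.

Lemma UT_mul11 (x y : UT F) : (UT_mul x y).1.1 = Gr_mul x.1.1 y.1.1.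
Proof. by case: x => [[a b] c]; case: y => [[a' b'] c']. Qed.
Lemma UT_mul12 (x y : UT F) : (UT_mul x y).1.2 = Gr_add (Gr_mul x.1.1 y.1.2) (Gr_mul x.1.2 y.2).
Proof. by case: x => [[a b] c]; case: y => [[a' b'] c']. Qed.
Lemma UT_mul2 (x y : UT F) : (UT_mul x y).2 = Gr_mul x.2 y.2.
Proof. by case: x => [[a b] c]; case: y => [[a' b'] c']. Qed.

Lemma ev11 hom (phi : var -> UT F) w :
  (eval_word (A := mkUT hom) phi w).1.1 = eval_word (A := Ek F k) (fun x => (phi x).1.1) w.
Proof. by elim: w => [|x w IH] //=; rewrite UT_mul11 IH. Qed.

Lemma ev2 hom (phi : var -> UT F) w :
  (eval_word (A := mkUT hom) phi w).2 = eval_word (A := Ek F k) (fun x => (phi x).2) w.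
Proof. by elim: w => [|x w IH] //=; rewrite UT_mul2 IH. Qed.

Lemma evp11 hom (phi : var -> UT F) s f :
  (eval_poly (A := mkUT hom) phi s f).1.1 = eval_poly (A := Ek F k) (fun x => (phi x).1.1) s f.
Proof.
elim: s => [|w s IH] //=.
by rewrite -IH -(ev11 hom phi w); case: (eval_word _ _) => [[? ?] ?]; case: (eval_poly _ _ _) => [[? ?] ?].
Qed.

Lemma evp2 hom (phi : var -> UT F) s f :
  (eval_poly (A := mkUT hom) phi s f).2 = eval_poly (A := Ek F k) (fun x => (phi x).2) s f.
Proof.
elim: s => [|w s IH] //=.
by rewrite -IH -(ev2 hom phi w); case: (eval_word _ _) => [[? ?] ?]; case: (eval_poly _ _ _) => [[? ?] ?].
Qed.


Lemma cover_of_finsupp (f : fpoly F) : finsupp_poly f -> exists s, cover s f.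
Proof.
case=> s Hs; exists (undup s); split; first exact: undup_uniq.
by move=> w; rewrite mem_undup; exact: Hs.
Qed.

Section Hom.
Variable hom : bool -> UT F -> Prop.
Hypothesis hd : forall g x, hom g x -> Gr_hom k g x.1.1 /\ Gr_hom k g x.2.

Lemma diag_zero (phi : var -> UT F) (gphi : graded_subst (A := mkUT hom) phi) f s :
  cover s f -> TZ2 (Ek F k) f ->
  (eval_poly (A := mkUT hom) phi s f).1.1 = @Gr_zero F /\
  (eval_poly (A := mkUT hom) phi s f).2 = @Gr_zero F.
Proof.
move=> [us hs] [_ H]; rewrite evp11 evp2; split; apply: H => //.
  by move=> x; exact: (hd (gphi x)).1.
by move=> x; exact: (hd (gphi x)).2.
Qed.

Lemma UT_mul_strict (x y : UT F) : x.1.1 = @Gr_zero F -> x.2 = @Gr_zero F ->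
  y.1.1 = @Gr_zero F -> y.2 = @Gr_zero F -> UT_mul x y = @UT_zero F.
Proof.
case: x => [[a b] c]; case: y => [[a' b'] c'] /= -> -> -> ->.
by rewrite /UT_zero !Gr_mul0l Gr_mul0r; congr (_, _, _); apply: functional_extensionality => Z0; rewrite /Gr_add /Gr_zero addr0.
Qed.

Lemma ideal_eval_zero (h : fpoly F) : ideal_prod (TZ2 (Ek F k)) (TZ2 (Ek F k)) h ->
  forall phi : var -> UT F, graded_subst (A := mkUT hom) phi ->
  forall s, cover s h -> eval_poly (A := mkUT hom) phi s h = @UT_zero F.
Proof.
case=> ps [Hall hE] phi gphi s cs.
apply: (@eval_ideal_zero F (mkUT hom) _ (@coUT F) (@coUT_inj F) (@coUT_add F)
  (@coUT_scal F) (@coUT_zero F) (@UT_mulDl F) (@UT_mulDr F) (@UT_mulZl F)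
  (@UT_mulZr F) (@UT_mulA F) (@UT_mul1l F) phi h ps s hE cs).
apply: all_seq_impl Hall => p [Tf Tg].
have [sf cf] := cover_of_finsupp Tf.1.
have [sg cg] := cover_of_finsupp Tg.1.
exists sf, sg; split => //; split => //.
have [f1 f2] := diag_zero gphi cf Tf.
have [g1 g2] := diag_zero gphi cg Tg.
exact: UT_mul_strict.
Qed.
End Hom.

Lemma ideal_finsupp (h : fpoly F) : ideal_prod (TZ2 (Ek F k)) (TZ2 (Ek F k)) h ->
  finsupp_poly h.
Proof.
case=> ps [Hall hE].
have [L [uL Lz]] : exists L, uniq L /\ all_seq (fun p => forall w, w \notin L -> pmul p.1 p.2 w = 0) ps.
  apply: common_cover; apply: all_seq_impl Hall => p [Tf Tg].
  have [sf cf] := cover_of_finsupp Tf.1.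
  have [sg cg] := cover_of_finsupp Tg.1.
  by exists (undup [seq u ++ v | u <- sf, v <- sg]); exact: pmul_cover.
exists L => w wL; rewrite hE; apply: sum_all_zero.
by apply: all_seq_impl Lz => p /(_ w wL).
Qed.

Lemma part1 (h : fpoly F) : ideal_prod (TZ2 (Ek F k)) (TZ2 (Ek F k)) h ->
  TZ2 (Rk F k) h.
Proof.
move=> Hh; split; first exact: ideal_finsupp.
move=> phi gphi s us hs.
apply: (@ideal_eval_zero (@UT_hom F k)) => //.
by move=> g [[a b] c] [].
Qed.
End Main.

Section Part2.
Variable F : fieldType.
Variable k : nat.

Definition cnt (S : {fset nat}) := #|` [fset i in S | (i < k)%N]|.
Definition Pn n (a : Gr F) := forall S, a S != 0 -> (n <= cnt S)%N.

Lemma cnt_split T S : T `<=` S -> cnt S = (cnt T + cnt (S `\` T))%N.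
Proof.
move=> TS; rewrite /cnt -cardfsUI.
have -> : [fset i in T | (i < k)%N] `&` [fset i in S `\` T | (i < k)%N] = fset0.
  by apply/fsetP => x; rewrite !inE /=; case: (x \in T); rewrite ?andbF.
rewrite cardfs0 addn0; congr (#|` _|); apply/fsetP => x; rewrite !inE /=.
case xT: (x \in T) => /=; last by [].
by rewrite orbF; case: (x < k)%N; rewrite ?andbF ?andbT //; exact: (fsubsetP TS x xT).
Qed.

Lemma cnt_le S : (cnt S <= k)%N.
Proof.
rewrite /cnt; have H : {subset [fset i in S | (i < k)%N] <= iota 0 k}.
  by move=> x; rewrite !inE /= mem_iota add0n => /andP[].
by have := uniq_leq_size (fset_uniq _) H; rewrite size_iota.
Qed.

Lemma Pn0 a : Pn 0 a.
Proof. by []. Qed.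

Lemma Pn_zero n : Pn n (@Gr_zero F).
Proof. by move=> S; rewrite /Gr_zero eqxx. Qed.

Lemma Pn_add n a b : Pn n a -> Pn n b -> Pn n (Gr_add a b).
Proof.
move=> Ha Hb S; rewrite /Gr_add; case: (eqVneq (a S) 0) => [->|aS _]; last exact: Ha.
by rewrite add0r => /Hb.
Qed.

Lemma Pn_mul n m a b : Pn n a -> Pn m b -> Pn (n + m) (Gr_mul a b).
Proof.
move=> Ha Hb S H; rewrite leqNgt; apply/negP => lt; move: H.
rewrite /Gr_mul big_seq big1 ?eqxx // => T; rewrite fpowersetE => TS.
case: (eqVneq (a T) 0) => [->|aT]; first by rewrite mulr0 mul0r.
case: (eqVneq (b (S `\` T)) 0) => [->|bT]; first by rewrite mulr0.
have := leq_add (Ha _ aT) (Hb _ bT); rewrite -(cnt_split TS) leqNgt lt.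
by [].
Qed.

Lemma Pn_odd a : Gr_hom k true a -> Pn 1 a.
Proof.
move=> [_ H] S /H; rewrite /degk -/(cnt S).
by case: (cnt S).
Qed.

Lemma Pn_kill a : Pn k.+1 a -> a = @Gr_zero F.
Proof.
move=> H; apply: functional_extensionality => S; apply/eqP; apply: contraT => aS.
by have := H S aS; rewrite ltnNge cnt_le.
Qed.

Lemma evR_odd (phi : var -> UT F) (gphi : graded_subst (A := Rk F k) phi) w :
  all (fun x => x.1) w ->
  [/\ Pn (size w) (eval_word (A := Rk F k) phi w).1.1,
      Pn (size w) (eval_word (A := Rk F k) phi w).1.2 &
      Pn (size w) (eval_word (A := Rk F k) phi w).2].
Proof.
elim: w => [|x w IH] /=; first by split; apply: Pn0.
case/andP => x1 /IH [H1 H2 H3].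
have := gphi x; rewrite /= x1.
change (UT_mul (phi x) (eval_word (A := Rk F k) phi w)) with
  (UT_mul (phi x) (eval_word (A := Rk F k) phi w)).
rewrite UT_mul11 UT_mul12 UT_mul2 -add1n.
case: (phi x) => [[a b] c] [/Pn_odd Ha /Pn_odd Hb /Pn_odd Hc] /=.
split; [exact: Pn_mul | | exact: Pn_mul].
by apply: Pn_add; apply: Pn_mul.
Qed.

Definition zw : word := [seq (true, i) | i <- iota 0 k.+1].
Definition hz : fpoly F := fun w => if w == zw then 1 else 0.

Lemma hz_R : TZ2 (Rk F k) hz.
Proof.
split; first by exists [:: zw] => w; rewrite inE /hz => /negbTE ->.
move=> phi gphi s us hs.
have zs : zw \in s.
  apply: contraT => /hs; rewrite /hz eqxx => /eqP; by rewrite oner_eq0.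
have Ez : eval_word (A := Rk F k) phi zw = @UT_zero F.
  have [] := evR_odd gphi (w := zw).
    by rewrite /zw; elim: (iota 0 k.+1).
  rewrite /zw size_map size_iota.
  case: (eval_word _ _) => [[a b] c] /= /Pn_kill -> /Pn_kill -> /Pn_kill ->.
  by [].
apply: coUT_inj => i.
rewrite (@co_eval F (Rk F k) _ (@coUT F) (@coUT_add F) (@coUT_scal F) (@coUT_zero F)).
under eq_bigr => w _ do rewrite /hz eq_sym.
by rewrite sum_pick // Ez.
Qed.

Definition eG j : Gr F := fun S => if S == [fset j] then 1 else 0.
Definition ind U : Gr F := fun S => if S == U then 1 else 0.

Definition phi0 (x : var) : UT F :=
  if x.1 then (if x.2 == 0%N then (@Gr_zero F, @Gr_one F, @Gr_zero F)
               else if (x.2 <= k)%N then (@Gr_zero F, @Gr_zero F, eG x.2.-1)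
               else @UT_zero F)
  else @UT_zero F.

Definition Thom (g : bool) (x : UT F) : Prop :=
  let: (a, b, c) := x in [/\ Gr_hom k g a, Gr_hom k (~~ g) b & Gr_hom k g c].

Lemma Gr_hom_zero g : Gr_hom k g (@Gr_zero F).
Proof. by split; [exists [::] | move=> S; rewrite /Gr_zero eqxx]. Qed.

Lemma Gr_hom_one : Gr_hom k false (@Gr_one F).
Proof.
split; first by exists [:: fset0] => S; rewrite inE /Gr_one => /negbTE ->.
move=> S; rewrite /Gr_one; case: (eqVneq S fset0) => [->|_]; last by rewrite eqxx.
move=> _; rewrite /degk.
by rewrite (_ : [fset i in fset0 | (i < k)%N] = fset0) ?cardfs0 //; apply/fsetP => x; rewrite !inE.
Qed.

Lemma Gr_hom_eG j : (j < k)%N -> Gr_hom k true (eG j).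
Proof.
move=> jk; split; first by exists [:: [fset j]] => S; rewrite inE /eG => /negbTE ->.
move=> S; rewrite /eG; case: (eqVneq S [fset j]) => [->|_]; last by rewrite eqxx.
move=> _; rewrite /degk.
rewrite (_ : [fset i in [fset j] | (i < k)%N] = [fset j]) ?cardfs1 //.
apply/fsetP => x; rewrite !inE /=; case: eqP => // ->; by rewrite jk.
Qed.

Lemma phi0_graded : graded_subst (A := mkUT Thom) phi0.
Proof.
move=> [g i]; rewrite /phi0 /=; case: g => /=; last by split; apply: Gr_hom_zero.
case: eqP => [_|i0]; first by split; [apply: Gr_hom_zero | apply: Gr_hom_one | apply: Gr_hom_zero].
case: ifP => ik; last by split; apply: Gr_hom_zero.
split; try apply: Gr_hom_zero; apply: Gr_hom_eG.
by case: i i0 ik => // i _ /=.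
Qed.

Lemma Gr_mul_eG_ind j U : (forall u, u \in U -> (j < u)%N) ->
  Gr_mul (eG j) (ind U) = ind (j |` U).
Proof.
move=> HU; have jU : j \notin U by apply/negP => /HU; rewrite ltnn.
apply: functional_extensionality => S; rewrite /Gr_mul /ind /eG.
case: (boolP (j \in S)) => jS.
  rewrite (big_fsetD1 [fset j]) /=; last by rewrite fpowersetE fsub1set.
  rewrite eqxx mulr1 big1_fset ?addr0; last first.
    by move=> T; rewrite !inE => /andP[/negbTE -> _] _; rewrite mulr0 mul0r.
  have E : (S `\` [fset j] == U) = (S == j |` U).
    apply/eqP/eqP => [<-|->].
      apply/fsetP => x; rewrite !inE /=; case: eqP => [->|] //=; by rewrite andbT.
    apply/fsetP => x; rewrite !inE /=; case: eqP => [->|] //=; by rewrite (negbTE jU).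
  rewrite E; case: eqP => [->|]; last by rewrite mulr0.
  rewrite mulr1 (_ : (j |` U) `\` [fset j] = U); last first.
    apply/fsetP => x; rewrite !inE /=; case: eqP => [->|] //=; by rewrite (negbTE jU).
  rewrite /ninv big_seq_fset1 (_ : [fset j0 in U | (j0 < j)%N] = fset0) ?cardfs0 ?expr0 //.
  apply/fsetP => x; rewrite !inE /=; case xU: (x \in U) => //=.
  by rewrite ltnNge ltnW // HU.
rewrite big1_seq.
  case: eqP => // E; move: jS; by rewrite E !inE eqxx.
move=> T; rewrite fpowersetE => /andP[_ TS]; case: eqP => [ET|]; last by rewrite mulr0 mul0r.
have : j \in S by apply: (fsubsetP TS); rewrite ET inE.
by rewrite (negbTE jS).
Qed.

Lemma evC n j : (j + n <= k)%N ->
  eval_word (A := Ek F k) (fun x => (phi0 x).2) [seq (true, i) | i <- iota j.+1 n]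
  = ind [fset x in iota j n].
Proof.
elim: n j => [|n IH] j H /=.
  apply: functional_extensionality => S; rewrite /Gr_one /ind.
  by rewrite (_ : [fset x in [::]] = fset0) //; apply/fsetP => x; rewrite !inE.
have jk : (j.+1 <= k)%N by apply: leq_trans H; rewrite addnS ltnS leq_addr.
have -> : (phi0 (true, j.+1)).2 = eG j by rewrite /phi0 /= jk.
have := IH j.+1; rewrite addSnnS => /(_ H) ->.
rewrite Gr_mul_eG_ind; last by move=> u; rewrite !inE /= mem_iota => /andP[].
congr ind; apply/fsetP => x; rewrite !inE /=.
by [].
Qed.

Lemma hz_notprod : ~ ideal_prod (TZ2 (Ek F k)) (TZ2 (Ek F k)) hz.
Proof.
move=> Hh.
have cz : cover [:: zw] hz.
  by split => // w; rewrite inE /hz => /negbTE ->.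
have hd : forall g (x : UT F), Thom g x -> Gr_hom k g x.1.1 /\ Gr_hom k g x.2.
  by move=> g [[a b] c] [].
have E := ideal_eval_zero hd Hh phi0_graded cz.
set S0 := [fset x in iota 0 k].
have Ez : (eval_word (A := mkUT Thom) phi0 zw).1.2 = ind S0.
  rewrite /zw /=.
  change ((UT_mul (phi0 (true, 0%N)) (eval_word (A := mkUT Thom) phi0 [seq (true, i) | i <- iota 1 k])).1.2 = ind S0).
  rewrite UT_mul12 /= Gr_mul0l Gr_mul1l (ev2 k) (evC (j := 0)) //.
  apply: functional_extensionality => S; by rewrite /Gr_add /Gr_zero add0r.
have Ep : (eval_poly (A := mkUT Thom) phi0 [:: zw] hz).1.2 =
    Gr_add (Gr_scal 1 (eval_word (A := mkUT Thom) phi0 zw).1.2) (@Gr_zero F).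
  rewrite /eval_poly /= /hz eqxx.
  by case: (eval_word _ _) => [[? ?] ?].
have := congr1 (fun x : UT F => x.1.2 S0) E.
rewrite Ep Ez /Gr_add /Gr_scal /ind eqxx /= /Gr_zero mulr1 addr0.
by move/eqP; rewrite oner_eq0.
Qed.
End Part2.

Local Close Scope fset_scope.
Local Close Scope ring_scope.

Theorem proposition7p2 (F : fieldType) (hF : [pchar F]%R =i pred0)
  (k : nat) (hk : (0 < k)%N) :
  (forall h : fpoly F, ideal_prod (TZ2 (Ek F k)) (TZ2 (Ek F k)) h ->
                       TZ2 (Rk F k) h) /\
  (exists h : fpoly F, TZ2 (Rk F k) h /\
                       ~ ideal_prod (TZ2 (Ek F k)) (TZ2 (Ek F k)) h).
Proof.
split; first exact: (@part1 F k).
exists (hz F k); split; [exact: hz_R | exact: hz_notprod].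
Qed.
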